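(* Let $n$ and $k$ be positive integers with $k \le n$, let $M$ be a matroid of rank $n$ with rank function $r$, and let $B_1, \dots, B_k$ be bases of $M$ (not necessarily disjoint). Let $\alpha = 3\lceil \log n\rceil$. Let $Q(B_1,\dots,B_k)$ denote the probability that, when $\alpha$-element subsets $S_1 \subseteq B_1, \dots, S_k \subseteq B_k$ are chosen independently, each uniformly at random, one has $r(S_1 \cup \cdots \cup S_k) < k$. Let $Q_{k,n}$ denote the probability that, when $\alpha$-element subsets $S_1, \dots, S_k$ of $\{1,\dots,n\}$ are chosen independently and uniformly at random, one has $|S_1 \cup \cdots \cup S_k| < k$. Then $Q(B_1,\dots,B_k) \le Q_{k,n}$.
   Context: Here $\log$ denotes the natural logarithm. *)

(* Defs.v *)
From HB Require Import structures.
From mathcomp Require Import all_boot all_order all_algebra.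
From mathcomp Require Import all_reals all_analysis Rstruct.
Set Implicit Arguments. Unset Strict Implicit. Unset Printing Implicit Defensive.
Import Order.TTheory GRing.Theory Num.Theory.
Local Open Scope ring_scope.

Record matroid (T : finType) := Matroid {
  mrank : {set T} -> nat;
  mrank_card : forall X : {set T}, (mrank X <= #|X|)%N;
  mrank_mono : forall X Y : {set T}, X \subset Y -> (mrank X <= mrank Y)%N;
  mrank_submod : forall X Y : {set T},
    (mrank (X :|: Y) + mrank (X :&: Y) <= mrank X + mrank Y)%N }.

Definition matroid_rank (T : finType) (M : matroid T) : nat := mrank M setT.

(* a basis is a maximal independent set: independent (r B = |B|) and
   spanning (r B = r E). *)
Definition is_basis (T : finType) (M : matroid T) (B : {set T}) : bool :=
  (mrank M B == #|B|) && (mrank M B == matroid_rank M).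

Definition alpha_of (n : nat) : nat :=
  (3 * `|Num.ceil (@ln Rdefinitions.R n%:R)|)%N.

(* Sample space: k-tuples (S_1..S_k) with S_i an a-subset of B_i; the
   independent uniform choice is the uniform distribution on this set. *)
Definition sample_space (T : finType) (k a : nat) (B : 'I_k -> {set T})
  : {set {ffun 'I_k -> {set T}}} :=
  [set S : {ffun 'I_k -> {set T}} | [forall i, (S i \subset B i) && (#|S i| == a)]].

Definition unif_prob (X : finType) (Omega E : {set X}) : rat :=
  (#|Omega :&: E|)%:R / (#|Omega|)%:R.

Definition Qmat (T : finType) (M : matroid T) (k : nat) (B : 'I_k -> {set T}) : rat :=
  let a := alpha_of (matroid_rank M) in
  unif_prob (sample_space a B)
    [set S : {ffun 'I_k -> {set T}} | (mrank M (\bigcup_i S i) < k)%N].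

Definition Qkn (k n : nat) : rat :=
  unif_prob (sample_space (alpha_of n) (fun _ : 'I_k => [set: 'I_n]))
    [set S : {ffun 'I_k -> {set 'I_n}} | (#|\bigcup_i S i| < k)%N].

(* Main.v *)
Require Import Defs.
From mathcomp Require Import all_boot all_order all_algebra.
From mathcomp Require Import all_reals all_analysis Rstruct.
Import Order.TTheory GRing.Theory Num.Theory.
From mathcomp Require Import boolp zify.
Set Implicit Arguments. Unset Strict Implicit.

Lemma card_ss (X : finType) k a (C : 'I_k -> {set X}) :
  #|sample_space a C| = foldr muln 1 [seq 'C(#|C i|, a) | i : 'I_k].
Proof.
have := @card_family _ (fun _ => {set X}) (fun i => mem [set A : {set X} | A \subset C i & #|A| == a]).
have -> : [seq #|mem [set A : {set X} | A \subset C x & #|A| == a]| | x : 'I_k] = [seq 'C(#|C i|, a) | i : 'I_k].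
  by apply: eq_map => i; rewrite cards_draws.
move=> <-; apply: eq_card => S; rewrite inE; apply/forallP/forallP => H i;
by have := H i; rewrite !inE.
Qed.

Lemma rank_add1 (T : finType) (M : matroid T) x X :
  mrank M (x |: X) <= (mrank M X).+1.
Proof.
have := mrank_submod M [set x] X; have := mrank_card M [set x]; rewrite cards1.
lia.
Qed.

Lemma rank_noinc (T : finType) (M : matroid T) X (s : seq T) :
  (forall y, y \in s -> mrank M (y |: X) <= mrank M X) ->
  mrank M (X :|: [set y in s]) <= mrank M X.
Proof.
elim: s => [|y s IH] H.
  rewrite (_ : [set y in [::]] = set0) ?setU0 //; by apply/setP=> z; rewrite !inE.
set Z := X :|: [set y in s].
have -> : X :|: [set z in y :: s] = y |: Z.
  by apply/setP=> z; rewrite !inE; case: (z == y); case: (z \in X); case: (z \in s).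
have h1 := mrank_submod M (y |: X) Z.
have e : (y |: X) :|: Z = y |: Z.
  by apply/setP=> z; rewrite !inE; case: (z == y); case: (z \in X); case: (z \in s).
rewrite e in h1.
have h2 : mrank M X <= mrank M ((y |: X) :&: Z).
  by apply: mrank_mono; rewrite subsetI subsetUr subsetUl.
have h3 : mrank M Z <= mrank M X.
  by apply: IH => z zs; apply: H; rewrite inE zs orbT.
have h4 := H y (mem_head _ _).
lia.
Qed.

Lemma exists_inc (T : finType) (M : matroid T) (X Y : {set T}) :
  mrank M X < mrank M (X :|: Y) -> exists2 y, y \in Y & mrank M X < mrank M (y |: X).
Proof.
case: (boolP [exists y in Y, mrank M X < mrank M (y |: X)]) => [/exists_inP [y ? ?]|/exists_inPn H] lt.
  by exists y.
exfalso.
have := @rank_noinc T M X (enum Y).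
rewrite set_enum => H'.
have : mrank M (X :|: Y) <= mrank M X.
  by apply: H' => y; rewrite mem_enum => /H; rewrite -leqNgt.
lia.
Qed.

Lemma L1 (T : finType) (M : matroid T) (U I J : {set T}) :
  mrank M (U :|: I) = mrank M U + #|I| -> J \subset I ->
  mrank M U + #|J| <= mrank M (U :|: J).
Proof.
move=> rI sJI.
have h := mrank_submod M (U :|: J) (I :\: J).
have e : (U :|: J) :|: (I :\: J) = U :|: I.
  apply/setP=> x; rewrite !inE; case: (boolP (x \in J)) => xJ.
    by rewrite (subsetP sJI _ xJ) !orbT.
  by rewrite /= orbF.
rewrite e in h.
have hc := mrank_card M (I :\: J).
rewrite cardsD (setIidPr sJI) in hc.
have := subset_leq_card sJI.
lia.
Qed.

Lemma exists_I (T : finType) (M : matroid T) n (B U : {set T}) :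
  matroid_rank M = n -> is_basis M B -> forall m, m <= n - mrank M U ->
  exists I : {set T}, [/\ I \subset B, #|I| = m & mrank M (U :|: I) = mrank M U + m].
Proof.
move=> hn hB; elim => [|m IH] hm.
  by exists set0; rewrite sub0set cards0 setU0 addn0.
have [I [sIB cI rI]] := IH (ltnW hm).
have rB : mrank M B = n by move: hB => /andP[_ /eqP ->].
have rUIB : mrank M (U :|: I :|: B) = n.
  apply/eqP; rewrite eqn_leq; apply/andP; split.
    by rewrite -hn; apply: mrank_mono; apply: subsetT.
  by rewrite -{1}rB; apply: mrank_mono; apply: subsetUr.
have [b bB hb] : exists2 b, b \in B & mrank M (U :|: I) < mrank M (b |: (U :|: I)).
  by apply: exists_inc; rewrite rUIB rI; lia.
have bI : b \notin I.
  apply/negP => bI; move: hb.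
  rewrite (_ : b |: (U :|: I) = U :|: I) ?ltnn //.
  by apply/setP=> x; rewrite !inE; case: eqP => // ->; rewrite bI orbT.
exists (b |: I); split.
- by rewrite subUset sub1set bB sIB.
- by rewrite cardsU1 bI cI.
- rewrite setUCA; have := @rank_add1 _ M b (U :|: I); lia.
Qed.

Lemma sigma_ex (T : finType) n (d : 'I_n) (B A : {set T}) (V : {set 'I_n}) :
  A \subset B -> #|B| = n ->
  exists sg : T -> 'I_n, {in B &, injective sg} /\ (#|V| <= #|A| -> V \subset sg @: A).
Proof.
move=> sAB cB.
pose lT := enum A ++ enum (B :\: A). pose lN := enum V ++ enum (~: V).
have uT : uniq lT.
  rewrite cat_uniq !enum_uniq /= andbT; apply/hasPn => x.
  by rewrite mem_enum !inE => /andP[xnA _]; rewrite mem_enum.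
have uN : uniq lN.
  rewrite cat_uniq !enum_uniq /= andbT; apply/hasPn => x.
  by rewrite mem_enum !inE => xnV; rewrite mem_enum.
have sT : size lT = n.
  by rewrite size_cat -!cardE cardsD (setIidPr sAB) subnKC ?cB // -cB; apply: subset_leq_card.

have sN : size lN = n by rewrite size_cat -!cardE cardsC card_ord.
have mT x : (x \in lT) = (x \in B).
  rewrite mem_cat !mem_enum !inE; case: (boolP (x \in A)) => xA //=.
  by rewrite (subsetP sAB _ xA).
exists (fun x => nth d lN (index x lT)); split.
  move=> x y xB yB /eqP; rewrite nth_uniq ?sN -?sT ?index_mem ?mT // => /eqP e.
  by rewrite -(nth_index x (_ : x \in lT)) ?mT // e nth_index ?mT.
move=> hV; apply/subsetP => v vV.
have iV : index v (enum V) < size (enum V) by rewrite index_mem mem_enum.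
have iA : index v (enum V) < size (enum A) by rewrite -cardE; apply: leq_trans hV; rewrite cardE.
set i := index v (enum V) in iV iA *.
have [x0 x0A] : exists x0, x0 \in A.
  by apply/card_gt0P; rewrite cardE; apply: leq_ltn_trans iA.
pose x := nth x0 (enum A) i.
apply/imsetP; exists x; first by rewrite -mem_enum mem_nth.
have eT : nth x0 lT i = x by rewrite nth_cat iA.
rewrite -eT index_uniq //; last by rewrite size_cat; apply: leq_trans iA (leq_addr _ _).
by rewrite nth_cat iV nth_index ?mem_enum.
Qed.

Lemma key (T : finType) (M : matroid T) n (U S I B : {set T}) (V : {set 'I_n}) (sg : T -> 'I_n) :
  I \subset B -> #|B :\: I| <= mrank M U ->
  (forall J : {set T}, J \subset I -> mrank M U + #|J| <= mrank M (U :|: J)) ->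
  V \subset sg @: (B :\: I) -> S \subset B ->
  #|V :|: sg @: S| <= mrank M (U :|: S).
Proof.
move=> sIB cBI hJ hV sSB.
have sub : V :|: sg @: S \subset sg @: (B :\: I) :|: sg @: (S :&: I).
  rewrite subUset; apply/andP; split; first by rewrite subsetU ?hV.
  apply/subsetP => y /imsetP[x xS ->]; rewrite in_setU.
  case: (boolP (x \in I)) => xI.
    by rewrite orbC imset_f // inE xS xI.
  by rewrite imset_f // inE xI (subsetP sSB).
apply: leq_trans (subset_leq_card sub) _.
apply: leq_trans (leq_card_setU (sg @: (B :\: I)) (sg @: (S :&: I))).1 _.
apply: leq_trans (leq_add (leq_trans (leq_imset_card sg (B :\: I)) cBI) (leq_imset_card sg (S :&: I))) _.
apply: leq_trans (hJ (S :&: I) (subsetIr _ _)) _.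
by apply: mrank_mono; apply: setUS; apply: subsetIl.
Qed.

Definition fcons (X : Type) k (x : X) (f : {ffun 'I_k -> X}) : {ffun 'I_k.+1 -> X} :=
  [ffun i => if unlift ord0 i is Some j then f j else x].
Definition ftail (X : Type) k (f : {ffun 'I_k.+1 -> X}) : {ffun 'I_k -> X} :=
  [ffun j => f (lift ord0 j)].

Lemma fcons0 (X : Type) k (x : X) (f : {ffun 'I_k -> X}) : fcons x f ord0 = x.
Proof. by rewrite ffunE unlift_none. Qed.

Lemma ftail_fcons (X : Type) k (x : X) (f : {ffun 'I_k -> X}) : ftail (fcons x f) = f.
Proof. by apply/ffunP=> j; rewrite !ffunE liftK. Qed.

Lemma fcons_eta (X : Type) k (g : {ffun 'I_k.+1 -> X}) : fcons (g ord0) (ftail g) = g.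
Proof.
apply/ffunP => i; rewrite ffunE; case: unliftP => [j ->|<-] //.
by rewrite ffunE.
Qed.

Lemma bigcup_rec (X : finType) k (g : {ffun 'I_k.+1 -> {set X}}) :
  \bigcup_i g i = g ord0 :|: \bigcup_j ftail g j.
Proof.
by rewrite big_ord_recl; congr (_ :|: _); apply: eq_bigr => j _; rewrite ffunE.
Qed.

Lemma ss_rec (X : finType) k a (C : 'I_k.+1 -> {set X}) g :
  (g \in sample_space a C) =
  ((g ord0 \subset C ord0) && (#|g ord0| == a)) &&
  (ftail g \in sample_space a (fun j => C (lift ord0 j))).
Proof.
rewrite !inE; apply/forallP/andP => [H|[H0 /forallP H] i].
  by split; [exact: H | apply/forallP => j; rewrite ffunE; exact: H].
case: (unliftP ord0 i) => [j ->|]; first by have := H j; rewrite ffunE.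
by move=> ->.
Qed.

Lemma imset_inj_sub (A : finType) (R : finType) (f : A -> R) (D X Y : {set A}) :
  {in D &, injective f} -> X \subset D -> Y \subset D -> f @: X = f @: Y -> X = Y.
Proof.
move=> inj sX sY e; apply/setP => x; apply/idP/idP => h.
  have : f x \in f @: Y by rewrite -e imset_f.
  case/imsetP => y yY /(inj x y (subsetP sX _ h) (subsetP sY _ yY)) ->; done.
have : f x \in f @: X by rewrite e imset_f.
case/imsetP => y yX /(inj x y (subsetP sY _ h) (subsetP sX _ yX)) ->; done.
Qed.

Lemma gen (T : finType) (M : matroid T) n a (d : 'I_n) : matroid_rank M = n ->
  forall k (B : 'I_k -> {set T}), (forall i, is_basis M (B i)) ->
  forall (U : {set T}) (V : {set 'I_n}),
  {phi : {ffun 'I_k -> {set T}} -> {ffun 'I_k -> {set 'I_n}} |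
    {in sample_space a B &, injective phi} /\
    forall S, S \in sample_space a B ->
      phi S \in sample_space a (fun _ : 'I_k => [set: 'I_n]) /\
      (#|V| <= mrank M U ->
        #|V :|: \bigcup_i phi S i| <= mrank M (U :|: \bigcup_i S i))}.
Proof.
move=> hn; elim => [|k IH] B hB U V.
  exists (fun _ => [ffun i => set0]); split.
    by move=> S S' _ _ _; apply/ffunP => -[].
  move=> S _; split; first by rewrite inE; apply/forallP => -[].
  by rewrite !big_ord0 !setU0.
have hB0 := hB ord0.
have cB0 : #|B ord0| = n by move: hB0 => /andP[/eqP <- /eqP ->]; exact: hn.
have [I [sIB cI rI]] := cid (exists_I hn hB0 (leqnn (n - mrank M U))).
have rUn : mrank M U <= n by rewrite -hn; apply: mrank_mono; apply: subsetT.
have cBI : #|B ord0 :\: I| = mrank M U.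
  rewrite cardsD (setIidPr sIB) cB0 cI; lia.
have [sg [sginj sgV]] := cid (sigma_ex d V (subsetDl (B ord0) I) cB0).
pose B' := fun j => B (lift ord0 j).
have hB' : forall j, is_basis M (B' j) by move=> j; apply: hB.
pose Phi S0 := sval (IH B' hB' (U :|: S0) (V :|: sg @: S0)).
have PhiP S0 := svalP (IH B' hB' (U :|: S0) (V :|: sg @: S0)).
exists (fun S : {ffun 'I_k.+1 -> {set T}} => fcons (sg @: S ord0) (Phi (S ord0) (ftail S))); split.
  move=> S S' hS hS' heq.
  move: (hS) (hS'); rewrite !ss_rec => /andP[/andP[s0 c0] t] /andP[/andP[s0' c0'] t'].
  have e0 : S ord0 = S' ord0.
    have := congr1 (fun f : {ffun 'I_k.+1 -> {set 'I_n}} => f ord0) heq; rewrite /= !fcons0.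
    exact: imset_inj_sub sginj s0 s0'.
  have et : ftail S = ftail S'.
    have := congr1 (@ftail _ _) heq; rewrite !ftail_fcons e0 => e.
    exact: (proj1 (PhiP (S' ord0)) _ _ t t' e).
  by rewrite -[S]fcons_eta -[S']fcons_eta e0 et.
move=> S hS; move: (hS); rewrite ss_rec => /andP[/andP[s0 c0] t].
have [_ HP] := PhiP (S ord0).
have [m1 m2] := HP _ t.
split.
  rewrite ss_rec fcons0 ftail_fcons m1 andbT subsetT /= card_in_imset //.
  by apply: sub_in2 sginj; apply/subsetP.
move=> hV.
rewrite !bigcup_rec fcons0 ftail_fcons !setUA.
apply: m2.
apply: (key (I := I) (B := B ord0)) => //.
- by rewrite cBI.
- by move=> J sJ; apply: L1 sJ; rewrite rI cI.
- by apply: sgV; rewrite cBI.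
Qed.

Unset Implicit Arguments. Set Strict Implicit.
Local Open Scope ring_scope.

Theorem lemma1p5 (n k : nat) (T : finType) (M : matroid T)
  (B : 'I_k -> {set T}) :
  (0 < n)%N -> (0 < k)%N -> (k <= n)%N ->
  matroid_rank M = n ->
  (forall i, is_basis M (B i)) ->
  Qmat M B <= Qkn k n.
Proof.
move=> n0 k0 kn hn hB.
pose d : 'I_n := Ordinal n0.
have [phi [inj H]] := gen (alpha_of n) d hn hB set0 set0.
rewrite /Qmat /Qkn /= hn /unif_prob.
have cardeq : #|sample_space (alpha_of n) B| =
    #|sample_space (alpha_of n) (fun _ : 'I_k => [set: 'I_n])|.
  rewrite !card_ss; congr foldr; apply: eq_map => i.
  rewrite cardsT card_ord; move: (hB i) => /andP[/eqP <- /eqP ->]; by rewrite hn.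
have num : (#|sample_space (alpha_of n) B :&:
              [set S : {ffun 'I_k -> {set T}} | (mrank M (\bigcup_i S i) < k)%N]| <=
            #|sample_space (alpha_of n) (fun _ : 'I_k => [set: 'I_n]) :&:
              [set S : {ffun 'I_k -> {set 'I_n}} | (#|\bigcup_i S i| < k)%N]|)%N.
  rewrite -(card_in_imset (f := phi)); last first.
    by apply: sub_in2 inj => x; rewrite inE => /andP[].
  apply: subset_leq_card; apply/subsetP => y /imsetP[S hS ->].
  move: hS; rewrite inE => /andP[hS hE].
  have [m1 m2] := H S hS.
  rewrite inE m1 inE /=.
  have h0 : (#|@set0 ('I_n)| <= mrank M set0)%N by rewrite cards0.
  move: hE; rewrite inE; have := m2 h0.
  rewrite !set0U; exact: leq_ltn_trans.
rewrite cardeq; apply: ler_wpM2r; first by rewrite invr_ge0 ler0n.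
by rewrite ler_nat.
Qed.
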